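(* Let $A$ be a ${}^\lambda\mathrm{H}_t(m,n;s,k)$ which is simple with respect to a choice of simple orderings of its rows and of its columns. Then (1) there exists a cyclic $s$-cycle decomposition of ${}^\lambda K_{(\frac{2ms}{\lambda t}+1)\times t}$, and (2) there exists a cyclic $k$-cycle decomposition of ${}^\lambda K_{(\frac{2nk}{\lambda t}+1)\times t}$.
   Context: Let $m,n,s,k,\lambda,t$ be positive integers with $t$ dividing $\frac{2nk}{\lambda}$, let $v=\frac{2nk}{\lambda}+t$ and let $J$ be the subgroup of $\mathbb{Z}_v$ of order $t$. A ${}^\lambda\mathrm{H}_t(m,n;s,k)$ is an $m\times n$ partially filled array with entries in $\mathbb{Z}_v$ such that: (a) each row has exactly $s$ and each column exactly $k$ filled cells; (b) the multiset $\{\pm x: x$ an entry of a filled cell$\}$ contains each element of $\mathbb{Z}_v\setminus J$ exactly $\lambda$ times and no element of $J$; (c) every row and column sums to $0$ in $\mathbb{Z}_v$. An ordering of a row/column (list of entries along a cyclic permutation of its filled cells) is simple if its partial sums are pairwise distinct; the array is simple if each row and column admits a simple ordering. $K_{q\times r}$ is the complete multipartite graph with $q$ parts of size $r$ and ${}^\lambda\Gamma$ is the multigraph obtained from $\Gamma$ by repeating each edge $\lambda$ times. A cyclic $\ell$-cycle decomposition of a multigraph with vertex set identified with $\mathbb{Z}_N$ is a set of $\ell$-cycles whose edge multisets partition the edge multiset, and which is closed under translation by every element of $\mathbb{Z}_N$. *)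

(* Defs.v *)
From HB Require Import structures.
From mathcomp Require Import all_boot all_order all_algebra all_fingroup.
Set Implicit Arguments. Unset Strict Implicit. Unset Printing Implicit Defensive.
Import GRing.Theory.
Local Open Scope ring_scope.

Definition Hv (n k lambda t : nat) : nat := ((2 * n * k) %/ lambda + t)%N.

(* The subgroup of Z_v of order t (t | v): the multiples of v/t. *)
Definition Jsub (v t : nat) : {set 'Z_v} := [set x : 'Z_v | ((v %/ t) %| (x : nat))%N].

Section Arrays.
Variables (v m n : nat).
Implicit Type A : 'M[option 'Z_v]_(m, n).

Definition entry (x : option 'Z_v) : 'Z_v := odflt 0 x.

Definition filled_row A (i : 'I_m) : {set 'I_n} := [set j | A i j != None].
Definition filled_col A (j : 'I_n) : {set 'I_m} := [set i | A i j != None].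

Definition simple_row_ordering A (i : 'I_m) (c : seq 'I_n) : bool :=
  perm_eq c (enum (filled_row A i)) &&
  uniq [seq \sum_(j <- take h c) entry (A i j) | h <- iota 1 (size c)].

Definition simple_col_ordering A (j : 'I_n) (c : seq 'I_m) : bool :=
  perm_eq c (enum (filled_col A j)) &&
  uniq [seq \sum_(i <- take h c) entry (A i j) | h <- iota 1 (size c)].

Definition is_simple A : Prop :=
  (forall i, exists c, simple_row_ordering A i c) /\
  (forall j, exists c, simple_col_ordering A j c).
End Arrays.

Definition is_H (m n s k lambda t : nat)
    (A : 'M[option 'Z_(Hv n k lambda t)]_(m, n)) : Prop :=
  [/\ forall i, #|filled_row A i| = s,
      forall j, #|filled_col A j| = k,
      forall y : 'Z_(Hv n k lambda t),
        (\sum_(i < m) \sum_(j < n)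
            ((A i j == Some y) + (A i j == Some (- y)))%N)%N
        = (if y \in @Jsub (Hv n k lambda t) t then 0 else lambda)%N,
      forall i, \sum_(j < n) entry (A i j) = 0
    & forall j, \sum_(i < m) entry (A i j) = 0].

(* Cycles on Z_N: a sequence of distinct vertices; its edges are the
   cyclically consecutive pairs. Number of times c uses edge {a,b}: *)
Definition cyc_edge_count (N : nat) (c : seq 'Z_N) (a b : 'Z_N) : nat :=
  \sum_(i < size c)
     ((((nth (0%R : 'Z_N) c i, nth (0%R : 'Z_N) c ((i.+1 %% size c)%N)) == (a, b)) ||
       ((nth (0%R : 'Z_N) c i, nth (0%R : 'Z_N) c ((i.+1 %% size c)%N)) == (b, a))) : nat).

Definition cyc_equiv (N : nat) (c c' : seq 'Z_N) : Prop :=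
  exists r, c' = rot r c \/ c' = rot r (rev c).

(* Edge multiplicity of ^lambda K_{q x r} on vertex set Z_{qr}, whose parts
   are the cosets of the subgroup of order r (the multiples of q). *)
Definition Kmult (q r lambda : nat) (a b : 'Z_(q * r)) : nat :=
  if (q %| nat_of_ord ((a - b)%R : 'Z_(q * r)))%N then 0 else lambda.

(* A cyclic l-cycle decomposition of ^lambda K_{q x r}: a (multi)family of
   l-cycles whose edges partition the edge multiset, closed under translation. *)
Definition cyclic_cycle_decomp (q r lambda l : nat) : Prop :=
  exists (M : nat) (D : 'I_M -> seq 'Z_(q * r)),
    [/\ forall i, size (D i) = l /\ uniq (D i),
        forall a b : 'Z_(q * r),
          (\sum_(i < M) cyc_edge_count (D i) a b)%N = @Kmult q r lambda a b
      & forall g : 'Z_(q * r), exists sigma : {perm 'I_M},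
          forall i, cyc_equiv (D (sigma i)) (map (fun x => x + g) (D i))].

Arguments is_H : clear implicits.
Arguments cyclic_cycle_decomp : clear implicits.

(* Main.v *)
Require Import Defs.
From HB Require Import structures.
From mathcomp Require Import all_boot all_order all_algebra all_fingroup.
From mathcomp Require Import ring.
Set Implicit Arguments. Unset Strict Implicit. Unset Printing Implicit Defensive.
Import GRing.Theory.
Local Open Scope ring_scope.

Lemma sum_eq_and (T : finType) (c : T) (C : bool) :
  (\sum_(g : T) (((g == c) && C) : nat) = C)%N.
Proof.
rewrite (bigD1 c) //= eqxx /= big1 ?addn0 // => g /negbTE -> //.
Qed.

Lemma sum_or2 (T : finType) (c1 c2 : T) (C1 C2 : bool) :
  (C1 -> C2 -> c1 != c2) ->
  (\sum_(g : T) ((((g == c1) && C1) || ((g == c2) && C2)) : nat) = C1 + C2)%N.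
Proof.
move=> Hd.
rewrite -(sum_eq_and c1 C1) -(sum_eq_and c2 C2) -big_split /=.
apply: eq_bigr => g _.
case E1: (g == c1); case E2: (g == c2); case: C1 Hd; case: C2 => //= Hd.
by move: (Hd erefl erefl); rewrite -(eqP E1) -(eqP E2) eqxx.
Qed.

Lemma edge_g_count (N : nat) (x e a b : 'Z_N) : e != 0 ->
  \sum_(g : 'Z_N) ((((x + g, x + e + g) == (a, b)) || ((x + g, x + e + g) == (b, a))) : nat)
   = ((e == (b - a)%R) + (e == (a - b)%R))%N.
Proof.
move=> e0.
have E (g c d : 'Z_N) : ((x + g, x + e + g) == (c, d)) = (g == c - x) && (e == d - c).
  rewrite xpair_eqE; apply/andP/andP => -[/eqP H1 /eqP H2]; split; apply/eqP.
  - rewrite -H1; ring.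
  - rewrite -H1 -H2; ring.
  - rewrite H1; ring.
  - rewrite H1 H2; ring.
under eq_bigr do rewrite !E.
apply: sum_or2 => /eqP H1 /eqP H2; apply/negP => /eqP H3.
move/negP: e0; apply; apply/eqP.
have : a = b by rewrite -(subrK x a) H3 subrK.
by move=> ab; rewrite H1 ab subrr.
Qed.

Lemma rot_sum (G : nat -> nat) (s : nat) : (0 < s)%N ->
  (\sum_(h < s) G (h.+1 %% s) = \sum_(h < s) G h)%N.
Proof.
case: s => [//|s] _.
rewrite big_ord_recr big_ord_recl /= modnn addnC; congr (_ + _)%N.
by apply: eq_bigr => h _; rewrite modn_small // ltnS ltn_ord.
Qed.

Lemma main_gen (m n s lambda q t N : nat) (j0 : 'I_n) (B : 'I_m -> 'I_n -> option 'Z_N) :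
  (0 < t)%N -> (0 < s)%N -> N = (q * t)%N ->
  (forall i, #|[set j | B i j != None]| = s) ->
  (forall y : 'Z_N, (\sum_(i < m) \sum_(j < n) ((B i j == Some y) + (B i j == Some (- y))))%N
       = (if y \in Jsub N t then 0 else lambda)%N) ->
  (forall i, \sum_(j < n) entry (B i j) = 0) ->
  (forall i, exists c, perm_eq c (enum [set j | B i j != None]) &&
        uniq [seq \sum_(j <- take h c) entry (B i j) | h <- iota 1 (size c)]) ->
  cyclic_cycle_decomp q t lambda s.
Proof.
move=> t0 s0 HN Hcard Hcnt Hsum Hs; subst N.
pose c i := xchoose (Hs i).
have cP i : perm_eq (c i) (enum [set j | B i j != None]) &&
        uniq [seq \sum_(j <- take h (c i)) entry (B i j) | h <- iota 1 (size (c i))].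
  exact: (xchooseP (Hs i)).
have sz i : size (c i) = s by rewrite (perm_size (andP (cP i)).1) -cardE Hcard.
pose V i := [seq \sum_(j <- take h (c i)) entry (B i j) | h <- iota 1 (size (c i))].
pose T := ('I_m * 'Z_(q * t))%type.
exists #|{: T}|, (fun k => map (fun x => x + (enum_val k).2) (V (enum_val k).1)).
have filled i l : (l < s)%N -> B i (nth j0 (c i) l) != None.
  move=> ls; have : nth j0 (c i) l \in c i by rewrite mem_nth // sz.
  by rewrite (perm_mem (andP (cP i)).1) mem_enum inE.
have J0 : (0 : 'Z_(q*t)) \in Jsub (q*t) t by rewrite inE; exact: dvdn0.
have nz i j : B i j != None -> entry (B i j) != 0.
  case E: (B i j) => [z|] //= _; apply/eqP => z0; subst z.
  move: (Hcnt 0); rewrite J0 => /eqP; rewrite sum_nat_eq0 => /forallP/(_ i) /=.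
  by rewrite sum_nat_eq0 => /forallP/(_ j); rewrite E oppr0 eqxx.
have rowsum i : \sum_(j <- c i) entry (B i j) = 0.
  rewrite (perm_big _ (andP (cP i)).1) big_enum /= big_mkcond /= -[RHS](Hsum i).
  by apply: eq_bigr => j _; rewrite inE; case: (B i j).
have szV i : size (V i) = s by rewrite size_map size_iota sz.
have nthV i l : (l < s)%N -> nth 0 (V i) l = \sum_(j <- take l.+1 (c i)) entry (B i j).
  by move=> ls; rewrite (nth_map 0%N) ?size_iota ?sz // nth_iota ?sz // add1n.
have Vstep i (h : nat) : (h < s)%N ->
    nth 0 (V i) (h.+1 %% s) = nth 0 (V i) h + entry (B i (nth j0 (c i) (h.+1 %% s))).
  move=> hs; case: (ltngtP h.+1 s) => [hs'||hs'].
  - rewrite modn_small // !nthV // (take_nth j0 (n:=h.+1)) ?sz // -cats1 big_cat big_seq1 //.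
  - by rewrite ltnNge hs.
  -
    have -> : (h.+1 %% s = 0)%N by rewrite hs' modnn.
    rewrite !nthV // hs'.
    have -> : take 1 (c i) = [:: nth j0 (c i) 0].
      have : (0 < size (c i))%N by rewrite sz (leq_ltn_trans _ hs).
      by case: (c i) => [|x l] //= _; rewrite take0.
    by rewrite -(sz i) take_size rowsum add0r /= big_seq1.
split.
- move=> k; split; first by rewrite size_map size_map size_iota sz.
  rewrite map_inj_uniq; first exact: (andP (cP _)).2.
  by move=> x y /addIr.
- move=> a b.
  rewrite -(big_enum_val (A := {: T}) (fun p => cyc_edge_count (map (fun x => x + p.2) (V p.1)) a b)).
  rewrite -(pair_big xpredT xpredT (fun i g => cyc_edge_count (map (fun x => x + g) (V i)) a b)) /=.
  have -> : Kmult lambda a b = (if (a - b)%R \in Jsub (q*t) t then 0 else lambda)%N.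
    by rewrite /Kmult inE mulnK.
  rewrite -Hcnt; apply: eq_bigr => i _.
  rewrite /cyc_edge_count.
  under eq_bigr => g _ do rewrite size_map szV.
  rewrite exchange_big /=.
  pose G l := ((B i (nth j0 (c i) l) == Some (a - b)%R) + (B i (nth j0 (c i) l) == Some (- (a - b))%R))%N.
  transitivity (\sum_(h < s) G (h.+1 %% s))%N.
    apply: eq_bigr => h _.
    have hs := ltn_ord h.
    have hs1 : (h.+1 %% s < s)%N by rewrite ltn_pmod // (leq_ltn_trans _ hs).
    set x := nth 0 (V i) h.
    set e := entry (B i (nth j0 (c i) (h.+1 %% s))).
    rewrite (eq_bigr (fun g => ((((x + g, x + e + g) == (a, b)) || ((x + g, x + e + g) == (b, a))) : nat))); last first.
      by move=> g _; rewrite !(nth_map 0 0 (fun y => y + g)) ?szV // Vstep.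
    rewrite edge_g_count; last exact/nz/filled.
    rewrite /G /e; case E: (B i (nth j0 (c i) (h.+1 %% s))) (filled i _ hs1) => [z|] //= _.
    by rewrite !(inj_eq (@Some_inj _)) opprB addnC.
  rewrite rot_sum //.
  rewrite -(big_mkord xpredT G) /G -(sz i) -(big_nth j0 xpredT (fun j => ((B i j == Some (a - b)%R) + (B i j == Some (- (a - b))%R))%N)).
  rewrite (perm_big _ (andP (cP i)).1) big_enum /= big_mkcond /=.
  by apply: eq_bigr => j _; rewrite inE; case: (B i j).
- move=> g.
  pose f (k : 'I_#|{: T}|) := enum_rank ((enum_val k).1, (enum_val k).2 + g).
  have finj : injective f.
    move=> k1 k2 /(congr1 enum_val); rewrite !enum_rankK => /eqP.
    rewrite xpair_eqE => /andP[/eqP e1 /eqP/addIr e2].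
    apply: enum_val_inj; move: e1 e2.
    by case: (enum_val k1) => x1 y1; case: (enum_val k2) => x2 y2 /= -> ->.
  exists (perm finj) => k; rewrite permE /f enum_rankK /=.
  exists 0%N; left; rewrite rot0 -map_comp.
  by apply: eq_map => y /=; rewrite addrA.
Qed.

Local Close Scope ring_scope.

Theorem proposition3 (m n s k lambda t : nat)
    (A : 'M[option 'Z_(Hv n k lambda t)]_(m, n)) :
  0 < m -> 0 < n -> 0 < s -> 0 < k -> 0 < lambda -> 0 < t ->
  lambda %| 2 * n * k -> t %| (2 * n * k) %/ lambda ->
  is_H m n s k lambda t A -> is_simple A ->
  cyclic_cycle_decomp ((2 * m * s) %/ (lambda * t) + 1) t lambda s /\
  cyclic_cycle_decomp ((2 * n * k) %/ (lambda * t) + 1) t lambda k.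
Proof.
move=> m0 n0 s0 k0 l0 t0 ldiv tdiv [Hcard Hcol Hcnt Hrow Hcolsum] [Hsr Hsc].
have ms : (m * s = n * k)%N.
  have E1 : (\sum_(i < m) #|filled_row A i| = m * s)%N.
    by rewrite (eq_bigr (fun _ => s)) // sum_nat_const card_ord.
  have E2 : (\sum_(j < n) #|filled_col A j| = n * k)%N.
    by rewrite (eq_bigr (fun _ => k)) // sum_nat_const card_ord.
  rewrite -E1 -E2.
  transitivity (\sum_(i < m) \sum_(j < n) ((A i j != None) : nat))%N.
    by apply: eq_bigr => i _; rewrite -sum1_card big_mkcond; apply: eq_bigr => j _; rewrite inE.
  rewrite exchange_big /=.
  by apply: eq_bigr => j _; rewrite -sum1_card [RHS]big_mkcond; apply: eq_bigr => i _; rewrite inE.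
have qE1 : Hv n k lambda t = ((2 * m * s) %/ (lambda * t) + 1) * t.
  by rewrite /Hv -(mulnA 2 m s) ms mulnA divnMA mulnDl divnK // mul1n.
have qE2 : Hv n k lambda t = ((2 * n * k) %/ (lambda * t) + 1) * t.
  by rewrite /Hv divnMA mulnDl divnK // mul1n.
split.
- apply: (@main_gen m n s lambda _ t (Hv n k lambda t) (Ordinal n0) (fun i j => A i j)) => //.
- apply: (@main_gen n m k lambda _ t (Hv n k lambda t) (Ordinal m0) (fun j i => A i j)) => //.
  by move=> y; rewrite exchange_big; exact: Hcnt.
Qed.
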